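(* Let $(F,\delta)$ be a differential field of characteristic zero and $(F(t),\delta)$ a monomial extension of $(F,\delta)$. If $f\in F(t)$ is stable in $(F(t),\delta)$, then $\nu_p(f)\ge0$ for every irreducible normal polynomial $p\in F[t]$; i.e., every irreducible factor of the denominator of $f$ is a special polynomial.
   Context: A differential field $(K,\delta)$ is a field with an additive map $\delta$ satisfying the Leibniz rule. $(F(t),\delta)$ is a monomial extension of $(F,\delta)$ if $t$ is transcendental over $F$, the derivation on $F(t)$ extends that of $F$, and $\delta(t)\in F[t]$. A polynomial $p\in F[t]$ is normal if $\gcd(p,\delta(p))=1$ and special if $\gcd(p,\delta(p))=p$. For an irreducible $p\in F[t]$ and nonzero $f\in F(t)$, writing $f=p^m a/b$ with $m\in\mathbb{Z}$, $a,b\in F[t]$, $\gcd(a,b)=1$, $p\nmid ab$, the order is $\nu_p(f)=m$; $\nu_p(0)=+\infty$. An element $f$ is stable in $(F(t),\delta)$ if there is a sequence $(a_i)_{i\ge0}$ in $F(t)$ with $a_0=f$ and $\delta(a_{i+1})=a_i$ for all $i\in\mathbb{N}$. *)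

(* Defs.v *)
From HB Require Import structures.
From mathcomp Require Import all_boot all_order all_algebra.
Set Implicit Arguments. Unset Strict Implicit. Unset Printing Implicit Defensive.
Import Order.TTheory GRing.Theory Num.Theory.
Local Open Scope ring_scope.

(* embedding F[t] -> F(t) (mathcomp's notation is Local in fraction.v) *)
Notation "x %:F" := (@FracField.tofrac _ x).

Definition is_derivation (K : fieldType) (d : K -> K) : Prop :=
  (forall x y, d (x + y) = d x + d y) /\ (forall x y, d (x * y) = d x * y + x * d y).

(* (F(t), D) is a monomial extension of (F, d): F(t) = {fraction {poly F}}
   (t = 'X is transcendental), D a derivation extending d, D t in F[t]. *)
Definition monomial_ext (F : fieldType) (d : F -> F)
  (D : {fraction {poly F}} -> {fraction {poly F}}) : Prop :=
  is_derivation d /\ is_derivation D /\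
  (forall c : F, D ((c%:P)%:F) = ((d c)%:P)%:F) /\
  (exists q : {poly F}, D ('X%:F) = q%:F).

Definition normal_poly (F : fieldType) (D : {fraction {poly F}} -> {fraction {poly F}})
  (p : {poly F}) : Prop :=
  exists P : {poly F}, D (p%:F) = P%:F /\ coprimep p P.

Definition mult_poly (F : fieldType) (p a : {poly F}) : nat :=
  (\max_(m < size a | (p ^+ m %| a)%R) m)%N.

Definition nu (F : fieldType) (p : {poly F}) (f : {fraction {poly F}}) : int :=
  (mult_poly p (\n_(repr f)))%:Z - (mult_poly p (\d_(repr f)))%:Z.

Definition stable (F : fieldType) (D : {fraction {poly F}} -> {fraction {poly F}})
  (f : {fraction {poly F}}) : Prop :=
  exists a : nat -> {fraction {poly F}}, a 0%N = f /\ forall i, D (a i.+1) = a i.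

(* Main.v *)
Require Import Defs.
From HB Require Import structures.
From mathcomp Require Import all_boot all_order all_algebra.
From mathcomp Require Import ring zify.
Import Order.TTheory GRing.Theory Num.Theory.
Local Open Scope ring_scope.
Local Open Scope quotient_scope.

Lemma pi_frac (R : idomainType) (x : {ratio R}) :
  (\pi_(FracField.type R) x) = (\n_x)%:F / (\d_x)%:F.
Proof.
have hd := denom_ratioP x.
apply: (@mulIf _ (\d_x)%:F); first by rewrite tofrac_eq0.
rewrite mulfVK ?tofrac_eq0 //.
unlock FracField.tofrac.
change (FracField.mul (\pi_(FracField.type R) x) (\pi_(FracField.type R) (Ratio \d_x 1)) = \pi_(FracField.type R) (Ratio \n_x 1)).
rewrite -FracField.pi_mul; apply/eqmodP; rewrite /= FracField.equivfE /FracField.mulf.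
rewrite !numden_Ratio ?oner_neq0 ?mulf_neq0 ?oner_neq0 //.
by rewrite !mulr1 mulrC.
Qed.

Set Implicit Arguments. Unset Strict Implicit.
Section Mult.
Variable F : fieldType.
Implicit Types p a b r s : {poly F}.

Lemma irr_coprime p r : irreducible_poly p -> ~~ (p %| r) -> coprimep p r.
Proof.
move=> irr npr; have [h|h] := irredp_XsubCP irr (dvdp_gcdl p r).
  by rewrite coprimep_def (eqp_size h) size_poly1.
by exfalso; move/negP: npr; apply; rewrite -(eqp_dvdl _ h) dvdp_gcdr.
Qed.

Lemma irr_prime p r s : irreducible_poly p -> p %| r * s -> (p %| r) || (p %| s).
Proof.
move=> irr h; case pr: (p %| r) => //=.
by rewrite -(Gauss_dvdpr _ (irr_coprime irr (negbT pr))).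
Qed.

Lemma irr_size p : irreducible_poly p -> (1 < size p)%N.
Proof. by case. Qed.

Lemma mult_spec p a k r : irreducible_poly p -> a = p ^+ k * r -> r != 0 ->
  ~~ (p %| r) -> mult_poly p a = k.
Proof.
move=> irr -> r0 npr.
have pk0 : p ^+ k != 0 by rewrite expf_neq0 // irredp_neq0.
have a0 : p ^+ k * r != 0 by rewrite mulf_neq0.
have hk : (k < size (p ^+ k * r)%R)%N.
  have h1 := dvdp_leq a0 (dvdp_mulr r (dvdpp _)).
  have h2 := size_exp p k. have h3 := irr_size irr.
  have h4 : (0 < size (p ^+ k))%N by rewrite size_poly_gt0.
  have h5 : (k <= (size p).-1 * k)%N by rewrite leq_pmull // -ltnS prednK // ltnW.
  apply: leq_trans h1; rewrite -(prednK h4) h2 ltnS; exact: h5.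
apply/eqP; rewrite eqn_leq; apply/andP; split.
  apply/bigmax_leqP => i hi; rewrite leqNgt; apply/negP => ki.
  have e : p ^+ i = p ^+ k * p ^+ (i - k) by rewrite -exprD subnKC // ltnW.
  rewrite e dvdp_mul2l // in hi.
  move/negP: npr; apply; apply: dvdp_trans hi.
  by apply: dvdp_exp; [rewrite subn_gt0|exact: dvdpp].
have := @leq_bigmax_cond _ (fun m : 'I_(size (p ^+ k * r)) => p ^+ m %| p ^+ k * r)
  (fun m => nat_of_ord m) (Ordinal hk).
by apply; apply: dvdp_mulr; apply: dvdpp.
Qed.

Lemma mult_exists p a : irreducible_poly p -> a != 0 ->
  exists k r, [/\ a = p ^+ k * r, r != 0 & ~~ (p %| r)].
Proof.
move=> irr; elim: (size a) {-2}a (leqnn (size a)) => [|n IH] b hb b0.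
  by move: b0; rewrite -size_poly_gt0; case: (size b) hb.
case pb: (p %| b); last by exists 0%N, b; rewrite expr0 mul1r pb.
have e := divpK pb.
have q0 : b %/ p != 0 by apply: contraNneq b0 => h; rewrite -e h mul0r.
set q := b %/ p in e q0 *.
have : (size q <= n)%N.
  move: hb; rewrite -e (size_mul q0 (irredp_neq0 irr)).
  have := irr_size irr. have : (0 < size q)%N by rewrite size_poly_gt0.
  move: (size q) (size p) => x y. lia.
move=> /IH /(_ q0) [k [r [er r0 nr]]]; exists k.+1, r; split => //.
by rewrite -e er exprSr mulrAC.
Qed.

Lemma mult_mul p a b : irreducible_poly p -> a != 0 -> b != 0 ->
  mult_poly p (a * b) = (mult_poly p a + mult_poly p b)%N.
Proof.
move=> irr a0 b0; have [i [r [ea r0 nr]]] := mult_exists irr a0.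
have [j [s [eb s0 ns]]] := mult_exists irr b0.
rewrite (mult_spec irr ea) // (mult_spec irr eb) //.
apply: (@mult_spec _ _ _ (r * s) irr); rewrite ?mulf_neq0 //.
  by rewrite ea eb exprD mulrACA.
by apply/negP => /(irr_prime irr) /orP [] ?; [move/negP: nr|move/negP: ns].
Qed.

Lemma cross a b n d : b != 0 -> d != 0 -> a%:F / b%:F = n%:F / d%:F ->
  a * d = n * b.
Proof.
move=> b0 d0 e; apply/eqP; rewrite -tofrac_eq !tofracM; apply/eqP.
have bF : b%:F != 0 by rewrite tofrac_eq0.
have dF : d%:F != 0 by rewrite tofrac_eq0.
by rewrite -[a%:F](divfK bF) -[n%:F](divfK dF) e mulrAC.
Qed.

Lemma nu_frac p g a b : irreducible_poly p -> a != 0 -> b != 0 ->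
  g = a%:F / b%:F -> nu p g = (mult_poly p a)%:Z - (mult_poly p b)%:Z.
Proof.
move=> irr a0 b0 eg; rewrite /nu.
set x := repr g.
have gx : g = (\n_x)%:F / (\d_x)%:F by rewrite -pi_frac /x reprK.
have d0 : \d_x != 0 by apply: denom_ratioP.
have n0 : \n_x != 0.
  apply/eqP => n0; move: gx; rewrite n0 tofrac0 mul0r eg => /eqP.
  by rewrite mulf_eq0 invr_eq0 !tofrac_eq0 (negbTE a0) (negbTE b0).
have := cross b0 d0 (etrans (esym eg) gx).
move=> /(congr1 (mult_poly p)); rewrite !mult_mul //.
move: (mult_poly p a) (mult_poly p b) (mult_poly p \n_x) (mult_poly p \d_x) => ? ? ? ?; lia.
Qed.

Lemma frac_cancel (c X Q : {poly F}) : c != 0 -> (c * X)%:F / (c * Q)%:F = X%:F / Q%:F.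
Proof.
move=> c0; rewrite !tofracM invfM mulrACA divff ?mul1r //.
by rewrite tofrac_eq0.
Qed.

End Mult.

Lemma G1 (L : fieldType) (x a : L) : x != 0 -> x * (- a / x ^+ 2) = - (a * x^-1).
Proof. by move=> x0; field. Qed.

Lemma G2 (L : fieldType) (x y a b : L) : y != 0 ->
  a * y^-1 + x * (- b / y ^+ 2) = (a * y - x * b) / y ^+ 2.
Proof. by move=> y0; field. Qed.

Lemma G3 (L : fieldType) (P q A a dq dp : L) (m : nat) : P != 0 -> q != 0 ->
 (a * (P ^+ m.+1 * q) - A * (m.+1%:R * P ^+ m * dp * q + P ^+ m.+1 * dq)) /
   (P ^+ m.+1 * q) ^+ 2
 = (P * (a * q - A * dq) - m.+1%:R * A * dp * q) / (P ^+ m.+2 * (q * q)).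
Proof.
move=> P0 q0; have u0 : P ^+ m != 0 by rewrite expf_neq0.
rewrite !exprS; move: (P ^+ m) u0 => u u0; move: (m.+1%:R : L) => c.
by field; rewrite ?P0 ?q0 ?u0.
Qed.

Section Deriv.
Variable F : fieldType.
Local Notation K := {fraction {poly F}}.

Lemma D0 (D : K -> K) : is_derivation D -> D 0 = 0.
Proof.
move=> hD; apply: (@addrI _ (D 0)); rewrite addr0 -hD.1 addr0 //.
Qed.

Lemma DN (D : K -> K) : is_derivation D -> forall x, D (- x) = - D x.
Proof.
move=> hD x; have := hD.1 x (- x); rewrite subrr D0 // => /esym /eqP.
by rewrite addrC addr_eq0 => /eqP.
Qed.

Lemma D1 (D : K -> K) : is_derivation D -> D 1 = 0.
Proof.
move=> hD; apply: (@addrI _ (D 1)); rewrite addr0.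
by have := hD.2 1 1; rewrite !mulr1 mul1r => h; rewrite -h.
Qed.

Lemma Dinv (D : K -> K) : is_derivation D -> forall x, x != 0 ->
  D (x^-1) = - D x / x ^+ 2.
Proof.
move=> hD x x0; have h := hD.2 x x^-1; rewrite divff // D1 // in h.
apply: (mulfI x0).
rewrite (_ : x * D x^-1 = - (D x * x^-1)); last first.
  by apply/eqP; rewrite -addr_eq0 addrC -h.
by rewrite (G1 _ x0).
Qed.

Lemma Dquot (D : K -> K) : is_derivation D -> forall x y, y != 0 ->
  D (x / y) = (D x * y - x * D y) / y ^+ 2.
Proof.
move=> hD x y y0; rewrite hD.2 (Dinv hD y0); exact: G2.
Qed.

Lemma DX (D : K -> K) : is_derivation D -> forall x n,
  D (x ^+ n.+1) = n.+1%:R * x ^+ n * D x.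
Proof.
move=> hD x; elim=> [|n IH]; first by rewrite expr1 expr0 mulr1 mul1r.
rewrite exprSr hD.2 IH exprSr; ring.
Qed.

Lemma Dpoly (d : F -> F) (D : K -> K) : monomial_ext d D ->
  forall P : {poly F}, exists P' : {poly F}, D (P%:F) = P'%:F.
Proof.
move=> [_ [hD [hc [q hX]]]]; elim/poly_ind => [|P c [P' hP]].
  by exists 0; rewrite tofrac0 D0.
exists (P' * 'X + P * q + (d c)%:P).
by rewrite !tofracD !tofracM hD.1 hD.2 hP hX hc.
Qed.

End Deriv.

Section Key.
Variable F : fieldType.
Local Notation K := {fraction {poly F}}.

Lemma rep (p : {poly F}) (g : K) : irreducible_poly p -> g != 0 ->
  exists A Q (m : nat), [/\ A != 0, Q != 0, ~~ (p %| A), ~~ (p %| Q) &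
   (nu p g = m%:Z /\ g = (p ^+ m * A)%:F / Q%:F) \/
   (nu p g = - (m.+1)%:Z /\ g = A%:F / (p ^+ m.+1 * Q)%:F)].
Proof.
move=> irr g0.
set x := repr g.
have gx : g = (\n_x)%:F / (\d_x)%:F by rewrite -pi_frac /x reprK.
have d0 : \d_x != 0 by apply: denom_ratioP.
have n0 : \n_x != 0.
  by apply: contraNneq g0 => n0; rewrite gx n0 tofrac0 mul0r.
have [i [A [eA A0 nA]]] := mult_exists irr n0.
have [j [Q [eQ Q0 nQ]]] := mult_exists irr d0.
have hnu := nu_frac irr n0 d0 gx.
rewrite (mult_spec irr eA) // (mult_spec irr eQ) // in hnu.
have pi0 : p ^+ i != 0 by rewrite expf_neq0 // irredp_neq0.
have pj0 : p ^+ j != 0 by rewrite expf_neq0 // irredp_neq0.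
exists A, Q.
case: (leqP j i) => hij.
  exists (i - j)%N; split => //; left; split.
    by rewrite hnu; move: hij; lia.
  have e : p ^+ i = p ^+ j * p ^+ (i - j) by rewrite -exprD subnKC.
  by rewrite gx eA eQ e -mulrA frac_cancel.
exists (j - i).-1; split=> //; right; split.
  by rewrite hnu; move: hij; lia.
have e : p ^+ j = p ^+ i * p ^+ (j - i).-1.+1.
  by rewrite -exprD prednK ?subn_gt0 // subnKC // ltnW.
by rewrite gx eA eQ e -mulrA frac_cancel.
Qed.

Lemma L1 (d : F -> F) (D : K -> K) (p : {poly F}) (g : K) :
  monomial_ext d D -> irreducible_poly p -> g != 0 -> 0 <= nu p g ->
  D g != 0 -> 0 <= nu p (D g).
Proof.
move=> hm irr g0 hnu Dg0; have hD := hm.2.1.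
have [A [Q [m [A0 Q0 nA nQ [[_ eg]|[e _]]]]]] := rep irr g0; last first.
  by move: hnu; rewrite e; lia.
set B := p ^+ m * A.
have [dB hB] := Dpoly hm B. have [dQ hQ] := Dpoly hm Q.
have QF : Q%:F != 0 by rewrite tofrac_eq0.
have e : D g = (dB * Q - B * dQ)%:F / (Q * Q)%:F.
  by rewrite eg Dquot // hB hQ tofracB !tofracM expr2.
have N0 : dB * Q - B * dQ != 0.
  by apply: contraNneq Dg0 => h; rewrite e h tofrac0 mul0r.
rewrite (nu_frac irr N0 _ e) ?mulf_neq0 // mult_mul //.
rewrite (@mult_spec _ p Q 0 Q irr) ?expr0 ?mul1r //.
Qed.

Lemma L2 (d : F -> F) (D : K -> K) (p : {poly F}) (g : K) :
  [pchar F] =i pred0 -> monomial_ext d D -> irreducible_poly p ->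
  normal_poly D p -> g != 0 -> nu p g < 0 ->
  D g != 0 /\ nu p (D g) = nu p g - 1.
Proof.
move=> hch hm irr [dP [hP cop]] g0 hnu; have hD := hm.2.1.
have [A [Q [m [A0 Q0 nA nQ [[e _]|[e eg]]]]]] := rep irr g0.
  by move: hnu; rewrite e; lia.
have [dA hA] := Dpoly hm A. have [dQ hQ] := Dpoly hm Q.
set N := p * (dA * Q - A * dQ) - m.+1%:R * A * dP * Q.
have p0 : p != 0 by rewrite irredp_neq0.
have pF : p%:F != 0 by rewrite tofrac_eq0.
have QF : Q%:F != 0 by rewrite tofrac_eq0.
have eD : D g = N%:F / (p ^+ m.+2 * (Q * Q))%:F.
  rewrite (tofracM (p ^+ m.+2)) (tofracXn m.+2 p) (tofracM Q Q).
  rewrite eg Dquot ?tofrac_eq0 ?mulf_neq0 ?expf_neq0 //.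
  rewrite tofracM hD.2 tofracXn DX // hA hQ hP.
  rewrite /N tofracB tofracM tofracB !tofracM rmorph_nat.
  exact: (@G3 _ p%:F Q%:F A%:F dA%:F dQ%:F dP%:F m pF QF).
have nN : ~~ (p %| N).
  apply/negP; rewrite /N dvdp_subr ?dvdp_mulIl // => h.
  have pc : ~~ (p %| (m.+1%:R : {poly F})).
    have c0 : (m.+1%:R : F) != 0 by rewrite ((pcharf0P F).1 hch).
    have cP : (m.+1%:R : F)%:P != 0 by rewrite polyC_eq0.
    rewrite -polyC_natr; apply/negP => hd; have := dvdp_leq cP hd.
    have := size_polyC_leq1 (m.+1%:R : F).
    have := irr_size irr; move=> h1 h2 h3; have := leq_trans h3 h2; by rewrite leqNgt h1.
  have pd : ~~ (p %| dP).
    apply/negP => h'.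
    have g1 : size (gcdp p dP) == 1%N by rewrite -coprimep_def.
    have : p %| gcdp p dP by rewrite dvdp_gcd dvdpp h'.
    move/dvdp_leq; rewrite -size_poly_gt0 (eqP g1) => /(_ isT) hs.
    have := irr_size irr; move: hs; move: (size p) => x; lia.
  move: h; case/(irr_prime irr)/orP => [|hq]; last by move/negP: nQ.
  case/(irr_prime irr)/orP => [|hd]; last by move/negP: pd.
  case/(irr_prime irr)/orP => [hc|ha]; [by move/negP: pc | by move/negP: nA].
have N0 : N != 0 by apply: contraNneq nN => ->; rewrite dvdp0.
have pm : p ^+ m.+2 != 0 by rewrite expf_neq0.
have den0 : p ^+ m.+2 * (Q * Q) != 0 by rewrite mulf_neq0 // mulf_neq0.
split.
  by rewrite eD mulf_eq0 invr_eq0 !tofrac_eq0 negb_or N0 den0.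
rewrite (nu_frac irr N0 den0 eD) e.
rewrite (@mult_spec _ p N 0 N irr) ?expr0 ?mul1r //.
rewrite (@mult_spec _ p _ m.+2 (Q * Q) irr) ?mulf_neq0 //; last first.
  by apply/negP => /(irr_prime irr); rewrite (negbTE nQ).
lia.
Qed.

End Key.

Unset Implicit Arguments. Set Strict Implicit.
Local Close Scope quotient_scope.

Theorem corollary2p15 (F : fieldType) (d : F -> F)
  (D : {fraction {poly F}} -> {fraction {poly F}}) (f : {fraction {poly F}}) :
  [pchar F] =i pred0 ->
  monomial_ext d D ->
  stable D f ->
  forall p : {poly F}, irreducible_poly p -> normal_poly D p ->
  f != 0 -> 0 <= nu p f.
Proof.
move=> hch hm [a [a0 ha]] p irr hn f0.
rewrite leNgt; apply/negP => hneg.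
have hD := hm.2.1.
have key : forall i, [/\ a i != 0, nu p (a i) < 0 & nu p (a i) = nu p f + i%:Z].
  elim=> [|i [ai0 ain aie]]; first by rewrite a0 f0 hneg addr0.
  have ai10 : a i.+1 != 0 by apply: contraNneq ai0 => h; rewrite -ha h D0.
  have ain1 : nu p (a i.+1) < 0.
    rewrite ltNge; apply/negP => h.
    have := L1 hm irr ai10 h; rewrite ha => /(_ ai0).
    by rewrite leNgt ain.
  have [_ e] := L2 hch hm irr hn ai10 ain1; rewrite ha in e.
  split => //; move: e aie; move: (nu p (a i.+1)) (nu p (a i)) (nu p f) => x y z.
  lia.
have [_ hlt he] := key `|nu p f|%N.
move: hlt he hneg; move: (nu p f) => y; lia.
Qed.
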